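(* Let $a,b,c,d\ge1$ be integers and let $$M=\begin{bmatrix}a&-1&-1&-1\\-1&b&-1&-1\\-1&-1&c&-1\\-1&-1&-1&d\end{bmatrix}.$$ If $\det M=0$ and two of $a,b,c,d$ equal $7$, then the other two are $1$ and $3$ (in some order). *)

(* Defs.v *)
From mathcomp Require Import all_boot all_order all_algebra.
Set Implicit Arguments. Unset Strict Implicit. Unset Printing Implicit Defensive.
Import GRing.Theory Num.Theory.
Local Open Scope ring_scope.

Definition Mmat (v : 'I_4 -> int) : 'M[int]_4 :=
  \matrix_(i < 4, j < 4) (if i == j then v i else -1).

(* Main.v *)
Require Import Defs.
From mathcomp Require Import all_boot all_order all_algebra.
From mathcomp Require Import ring lra zify.
Import GRing.Theory Num.Theory.
Local Open Scope ring_scope.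

Lemma detE (R : comRingType) n (A : 'M[R]_n.+1) :
  \det A = \sum_(j < n.+1) A ord0 j * ((-1) ^+ (0 + j) * \det (row' ord0 (col' j A))).
Proof. by rewrite (expand_det_row _ ord0); apply: eq_bigr => j _; rewrite /cofactor. Qed.

Definition Anat (R : comRingType) n (A : 'M[R]_n.+1) (i j : nat) := A (inord i) (inord j).
Arguments Anat {R n} A i j.
Lemma AnatE (R : comRingType) n (A : 'M[R]_n.+1) i j : A i j = Anat A i j.
Proof. by rewrite /Anat !inord_val. Qed.

Lemma det3 (R : comRingType) (A : 'M[R]_3) : \det A =
  Anat A 0 0 * (Anat A 1 1 * Anat A 2 2 - Anat A 1 2 * Anat A 2 1) - Anat A 0 1 * (Anat A 1 0 * Anat A 2 2 - Anat A 1 2 * Anat A 2 0)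
  + Anat A 0 2 * (Anat A 1 0 * Anat A 2 1 - Anat A 1 1 * Anat A 2 0).
Proof.
rewrite detE !big_ord_recl big_ord0.
rewrite !detE !big_ord_recl !big_ord0.
rewrite !detE !big_ord_recl !big_ord0 !det_mx00 !mxE !AnatE /=.
ring.
Qed.

Lemma inord_eqE n a b : (a < n.+1)%N -> (b < n.+1)%N -> (inord a == inord b :> 'I_n.+1) = (a == b).
Proof. by move=> ha hb; rewrite -(inj_eq val_inj) /= !inordK. Qed.

Lemma det_formula (v : 'I_4 -> int) :
  \det (Mmat v) = let x0 := v (inord 0) + 1 in let x1 := v (inord 1) + 1 in let x2 := v (inord 2) + 1 in let x3 := v (inord 3) + 1 in
   x0*x1*x2*x3 - (x1*x2*x3 + x0*x2*x3 + x0*x1*x3 + x0*x1*x2).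
Proof.
have hM : forall i j, Mmat v i j = if i == j then v i else -1 by move=> i j; rewrite mxE.
move: (Mmat v) hM => A hM.
rewrite detE !big_ord_recl big_ord0 !det3 /Anat !mxE.
rewrite !AnatE /= !inordK //= /bump /= ?add0n ?add1n ?addn0 /Anat !hM !inord_eqE //=.
ring.
Qed.

Lemma key (x y : int) : 1 <= x -> 1 <= y ->
  3 * ((x+1) * (y+1)) = 4 * ((x+1) + (y+1)) -> (x = 1 /\ y = 3) \/ (x = 3 /\ y = 1).
Proof.
move=> hx hy h.
have [hx2|hx2] : x <= 2 \/ 3 <= x by lia.
  have [e|e] : x = 1 \/ x = 2 by lia.
  - left; subst x; split => //; lia.
  - exfalso; subst x; lia.
have [hy2|hy2] : y <= 2 \/ 3 <= y by lia.
  have [e|e] : y = 1 \/ y = 2 by lia.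
  - right; subst y; split => //; lia.
  - exfalso; subst y; lia.
exfalso. nia.
Qed.

Theorem lemma3p8 (v : 'I_4 -> int) :
  (forall i, 1 <= v i) ->
  \det (Mmat v) = 0 ->
  forall i j : 'I_4, i != j -> v i = 7 -> v j = 7 ->
  forall k l : 'I_4, k != i -> k != j -> l != i -> l != j -> k != l ->
  (v k = 1 /\ v l = 3) \/ (v k = 3 /\ v l = 1).
Proof.
move=> hv; rewrite det_formula /= => hd i j hij hi hj k l hki hkj hli hlj hkl.
apply: key; [exact: hv | exact: hv |].
move: hd hi hj.
have E : forall m : 'I_4, m = inord 0 \/ m = inord 1 \/ m = inord 2 \/ m = inord 3.
  case=> [[|[|[|[|m]]]] hm] //=;
  [left|right;left|right;right;left|right;right;right]; apply/val_inj; by rewrite /= inordK.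
move: hij hki hli hkj hlj hkl.
case: (E i) => [->|[->|[->|->]]]; case: (E j) => [->|[->|[->|->]]];
case: (E k) => [->|[->|[->|->]]]; case: (E l) => [->|[->|[->|->]]];
rewrite ?inord_eqE //= => _ _ _ _ _ _ hd hi hj; rewrite hi hj in hd;
  apply/eqP; rewrite -subr_eq0; apply/eqP; apply: (@mulfI _ 16) => //; rewrite mulr0 -hd; ring.
Qed.
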